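(* (a) For every integer $n\ge 5$ and every $\epsilon>0$ there exists a convex $n$-gon $K$ such that $\Delta(K_1)/\Delta(K)<\epsilon$. (b) For every integer $n\ge 6$ and every $\epsilon>0$ there exists a convex $n$-gon $K$ such that $\Delta(K_1)/\Delta(K)>1-\epsilon$.
   Context: For a convex polygon $K=A_1A_2\ldots A_n$ ($n\ge 5$, vertices listed counterclockwise, indices taken modulo $n$), $K_1=B_1B_2\ldots B_n$ denotes the convex $n$-gon bounded by the short diagonals $A_1A_3, A_2A_4,\ldots,A_{n-1}A_1,A_nA_2$, where $B_i$ is the intersection point of the diagonals $A_{i-1}A_{i+1}$ and $A_iA_{i+2}$. $\Delta(\cdot)$ denotes area. *)

(* Defs.v *)
From mathcomp Require Import all_boot all_order all_algebra.
From mathcomp Require Import reals.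
Set Implicit Arguments. Unset Strict Implicit. Unset Printing Implicit Defensive.
Import Order.TTheory GRing.Theory Num.Theory.
Local Open Scope ring_scope.

Section Defs.
Variable R : realType.
Definition point := (R * R)%type.

(* cross o a b > 0 iff (o, a, b) is a counterclockwise (left) turn *)
Definition cross (o a b : point) : R :=
  (a.1 - o.1) * (b.2 - o.2) - (a.2 - o.2) * (b.1 - o.1).

Definition vtx (n : nat) (P : nat -> point) (i : nat) : point := P (i %% n)%N.

(* P 0, ..., P (n-1) are the vertices, listed counterclockwise, of a convex
   n-gon: every vertex other than the endpoints of an edge lies strictly to
   the left of that (directed) edge. *)
Definition convex_ngon (n : nat) (P : nat -> point) : Prop :=
  (3 <= n)%N /\
  forall i j : nat, (i < n)%N -> (j < n)%N -> j != i -> j != (i.+1 %% n)%N ->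
    0 < cross (P i) (P (i.+1 %% n)%N) (P j).

Definition area (n : nat) (Q : nat -> point) : R :=
  `| (\sum_(i < n) ((Q i).1 * (Q (i.+1 %% n)%N).2 - (Q (i.+1 %% n)%N).1 * (Q i).2)) / 2 |.

(* intersection point of the lines p1p2 and p3p4 (when not parallel) *)
Definition line_inter (p1 p2 p3 p4 : point) : point :=
  let d := (p2.1 - p1.1) * (p4.2 - p3.2) - (p2.2 - p1.2) * (p4.1 - p3.1) in
  let t := ((p3.1 - p1.1) * (p4.2 - p3.2) - (p3.2 - p1.2) * (p4.1 - p3.1)) / d in
  (p1.1 + t * (p2.1 - p1.1), p1.2 + t * (p2.2 - p1.2)).

(* B_i = intersection of the diagonals A_{i-1}A_{i+1} and A_i A_{i+2} *)
Definition Bpt (n : nat) (P : nat -> point) (i : nat) : point :=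
  line_inter (vtx n P (i + n - 1)%N) (vtx n P i.+1) (vtx n P i) (vtx n P i.+2).

(* K_1 = B_0 B_1 ... B_{n-1} (same cyclic polygon as B_1 ... B_n) *)
Definition K1 (n : nat) (P : nat -> point) : nat -> point := Bpt n P.
End Defs.

(* Main.v *)
Require Import Defs.
From mathcomp Require Import all_boot all_order all_algebra.
From mathcomp Require Import reals.
From mathcomp.algebra_tactics Require Import ring lra.
From mathcomp Require Import zify.
Set Implicit Arguments. Unset Strict Implicit. Unset Printing Implicit Defensive.
Import Order.TTheory GRing.Theory Num.Theory.
Local Open Scope ring_scope.

Section S.
Variable R : realType.

Lemma para_inter (a b c d : R) : (b-a)*(c-b)*(d-c)*(a-d) < 0 ->
  exists be : R, line_inter (a, a^+2) (c, c^+2) (b, b^+2) (d, d^+2) = (be, (a+c)*be - a*c)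
   /\ (a+c)*be - a*c = (b+d)*be - b*d /\ (be-a)*(be-c) <= 0 /\ (be-b)*(be-d) <= 0.
Proof.
move=> HQ.
set D := b + d - a - c.
have HD : D != 0.
  apply/eqP => D0.
  have ed : d = a + c - b by rewrite /D in D0; lra.
  move: HQ; rewrite ed.
  have -> : (b - a) * (c - b) * (a + c - b - c) * (a - (a + c - b)) = ((b-a)*(c-b))^+2 by ring.
  by rewrite ltNge sqr_ge0.
have Hca : c - a != 0.
  apply/eqP => e. have ec : c = a by lra.
  move: HQ; rewrite ec.
  have -> : (b - a) * (a - b) * (d - a) * (a - d) = ((b-a)*(d-a))^+2 by ring.
  by rewrite ltNge sqr_ge0.
have Hdb : d - b != 0.
  apply/eqP => e. have ed : d = b by lra.
  move: HQ; rewrite ed.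
  have -> : (b - a) * (c - b) * (b - c) * (a - b) = ((b-a)*(c-b))^+2 by ring.
  by rewrite ltNge sqr_ge0.
have HD2 : 0 < D^+2 by rewrite lt_def sqrf_eq0 HD sqr_ge0.
have Hden : (c - a) * (d^+2 - b^+2) - (c^+2 - a^+2)*(d-b) = (c-a)*(d-b)*D by rewrite /D; ring.
have Hden0 : (c-a)*(d-b)*D != 0 by rewrite !mulf_neq0.
exists ((b*d - a*c)/D).
split.
  rewrite /line_inter /=. rewrite Hden. congr pair.
    by rewrite /D; field; rewrite -/D HD Hdb Hca.
  by rewrite /D; field; rewrite -/D HD Hdb Hca.
split; first by rewrite /D; field; rewrite -/D HD.
set be := (b*d - a*c)/D.
have e1 : (be - a) * (be - c) * D^+2 = (b-a)*(c-b)*(d-c)*(a-d) by rewrite /be /D; field; rewrite -/D HD.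
have e2 : (be - b) * (be - d) * D^+2 = (b-a)*(c-b)*(d-c)*(a-d) by rewrite /be /D; field; rewrite -/D HD.
split; nra.
Qed.

Definition para (x : nat -> R) (j : nat) : point R := (x j, x j ^+ 2).

Lemma cross_para (u v w : R) : cross (u,u^+2) (v,v^+2) (w,w^+2) = (v-u)*(w-u)*(w-v).
Proof. rewrite /cross /=; ring. Qed.

Lemma pos3 (u v w : R) : 0 < u -> 0 < v -> 0 < w -> 0 < u*v*w.
Proof. by move=> *; rewrite !mulr_gt0. Qed.

Lemma convex_para n (x : nat -> R) : (3 <= n)%N ->
  (forall i j, (i < j)%N -> x i < x j) -> convex_ngon n (para x).
Proof.
move=> n3 xinc; split => // i j Hi Hj Hji Hji1.
rewrite /para cross_para.
case: (ltnP i.+1 n) => h.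
  rewrite modn_small // in Hji1 *.
  have [ji|ij] : (j < i)%N \/ (i.+1 < j)%N by lia.
    have h1 := xinc _ _ ji. have h2 := xinc i i.+1 (ltnSn i).
    have -> : (x i.+1 - x i) * (x j - x i) * (x j - x i.+1) = (x i.+1 - x i) * (x i - x j) * (x i.+1 - x j) by ring.
    apply: pos3; lra.
  have h1 := xinc _ _ ij. have h2 := xinc i i.+1 (ltnSn i).
  apply: pos3; lra.
have ein : i.+1 = n by lia.
rewrite ein modnn in Hji1 *.
have h1 : x 0 < x j by apply: xinc; lia.
have h2 : x j < x i by apply: xinc; lia.
have -> : (x 0 - x i) * (x j - x i) * (x j - x 0) = (x i - x 0) * (x i - x j) * (x j - x 0) by ring.
apply: pos3; lra.
Qed.

Definition xm (n : nat) (x : nat -> R) (j : nat) := x (j %% n)%N.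

Lemma vtx_para (n : nat) x (j : nat) : vtx n (para x) j = (xm n x j, xm n x j ^+ 2).
Proof. by []. Qed.

Lemma xm_addn (n : nat) x (j : nat) : xm n x (j + n)%N = xm n x j.
Proof. by rewrite /xm modnDr. Qed.

Lemma cyc_pos (n : nat) (x : nat -> R) (k d : nat) : (3 <= n)%N ->
  (forall i j, (i < j)%N -> x i < x j) -> (2 <= d < n)%N ->
  0 < cross (vtx n (para x) k) (vtx n (para x) (k + 1)%N) (vtx n (para x) (k + d)%N).
Proof.
move=> n3 xinc /andP[d2 dn].
have [_ H] := convex_para n3 xinc.
have n0 : (0 < n)%N by lia.
have Hi : (k %% n < n)%N by rewrite ltn_pmod.
have Hj : ((k + d) %% n < n)%N by rewrite ltn_pmod.
have ne1 : ((k + d) %% n != k %% n)%N.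
  by rewrite -[in X in _ != X](addn0 k) eqn_modDl mod0n modn_small //; lia.
have ne2 : ((k + d) %% n != (k %% n).+1 %% n)%N.
  rewrite -addn1 modnDml eqn_modDl modn_small // modn_small //; lia.
have := H _ _ Hi Hj ne1 ne2.
by rewrite /vtx -addn1 modnDml.
Qed.

Lemma Bform (n : nat) (x : nat -> R) (k : nat) : (5 <= n)%N ->
  (forall i j, (i < j)%N -> x i < x j) ->
  let a := xm n x (k + n - 1) in let b := xm n x (k + n - 1 + 1) in
  let c := xm n x (k + n - 1 + 2) in let d := xm n x (k + n - 1 + 3) in
  exists be : R, Bpt n (para x) k = (be, (a+c)*be - a*c)
   /\ (a+c)*be - a*c = (b+d)*be - b*d /\ (be-a)*(be-c) <= 0 /\ (be-b)*(be-d) <= 0.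
Proof.
move=> n5 xinc a b c d.
set m := (k + n - 1)%N.
have n3 : (3 <= n)%N by lia.
have E1' : 0 < cross (vtx n (para x) m) (vtx n (para x) (m + 1)%N) (vtx n (para x) (m + 2)%N).
  by apply: cyc_pos => //; lia.
have E4 : 0 < cross (vtx n (para x) (m+2)%N) (vtx n (para x) (m + 2 + 1)%N) (vtx n (para x) (m + 2 + (n-2))%N).
  by apply: cyc_pos => //; lia.
have e4 : (m + 2 + (n - 2) = m + n)%N by lia.
rewrite e4 -addnA /= !vtx_para xm_addn !cross_para in E4.
rewrite !vtx_para !cross_para in E1'.
rewrite -/a -/b -/c -/d in E1' E4.
have HQ : (b-a)*(c-b)*(d-c)*(a-d) < 0.
  have e : ((b - a) * (c - a) * (c - b)) * ((d - c) * (a - c) * (a - d)) = - ((b-a)*(c-b)*(d-c)*(a-d)) * (c-a)^+2 by ring.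
  have h := mulr_gt0 E1' E4. rewrite e in h.
  rewrite ltNge; apply/negP => HQ0.
  have : - ((b-a)*(c-b)*(d-c)*(a-d)) * (c-a)^+2 <= 0 by rewrite mulNr oppr_le0 mulr_ge0 // sqr_ge0.
  lra.
have [be [H1 [H2 [H3 H4]]]] := para_inter HQ.
exists be; split => //.
have em1 : (m + 1 = k + n)%N by lia.
have em2 : (m + 2 = k.+1 + n)%N by lia.
have em3 : (m + 3 = k.+2 + n)%N by lia.
rewrite -H1 /Bpt !vtx_para /a /b /c /d em1 em2 em3 !xm_addn.
by [].
Qed.

Definition br (p q : point R) : R := p.1 * q.2 - q.1 * p.2.

Lemma sum_shift (n : nat) (f : nat -> R) : f n = f 0%N ->
  \sum_(i < n) f i.+1 = \sum_(i < n) f i.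
Proof.
case: n => [|m] H; first by rewrite !big_ord0.
rewrite big_ord_recr big_ord_recl /= H addrC; congr (_ + _).
Qed.

Lemma vtx_addn (n : nat) (P : nat -> point R) j : vtx n P (j + n)%N = vtx n P j.
Proof. by rewrite /vtx modnDr. Qed.

Lemma Bpt_mod (n : nat) (P : nat -> point R) j : (0 < n)%N -> Bpt n P (j %% n)%N = Bpt n P j.
Proof.
move=> n0; rewrite /Bpt /vtx.
have e1 : ((j %% n + n - 1) %% n = (j + n - 1) %% n)%N.
  have -> : (j %% n + n - 1 = j %% n + (n - 1))%N by lia.
  have -> : (j + n - 1 = j + (n - 1))%N by lia.
  by rewrite modnDml.
have e2 : ((j %% n).+1 %% n = j.+1 %% n)%N by rewrite -addn1 modnDml addn1.
have e3 : ((j %% n).+2 %% n = j.+2 %% n)%N by rewrite -addn2 modnDml addn2.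
by rewrite e1 e2 e3 modn_mod.
Qed.

Lemma area_A (n : nat) x : area n (para x) =
  `| (\sum_(i < n) br (vtx n (para x) i) (vtx n (para x) i.+1)) / 2 |.
Proof.
rewrite /area; congr (`| _ / 2|); apply: eq_bigr => i _.
by rewrite /br /vtx (modn_small (ltn_ord i)).
Qed.

Lemma area_B (n : nat) x : (0 < n)%N -> area n (K1 n (para x)) =
  `| (\sum_(i < n) br (Bpt n (para x) i) (Bpt n (para x) i.+1)) / 2 |.
Proof.
move=> n0; rewrite /area; congr (`| _ / 2|); apply: eq_bigr => i _.
by rewrite /K1 /br Bpt_mod.
Qed.

Lemma btw (y p q : R) : (y - p) * (y - q) <= 0 -> p <= q -> p <= y <= q.
Proof. move=> H pq; apply/andP; split; nra. Qed.

Lemma btw_abs (y p q : R) : (y - p) * (y - q) <= 0 -> `|y - q| <= `|q - p|.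
Proof.
move=> H; case: (lerP p q) => pq.
  have /andP[h1 h2] := btw H pq.
  have e1 : y - q <= 0 by lra. have e2 : 0 <= q - p by lra.
  rewrite (ler0_norm e1); lra.
have H' : (y - q) * (y - p) <= 0 by rewrite mulrC.
have /andP[h1 h2] := btw H' (ltW pq).
have e1 : 0 <= y - q by lra. have e2 : q - p <= 0 by lra.
rewrite (ger0_norm e1); lra.
Qed.

Lemma btw_abs2 (y z p q : R) : (y - p) * (y - q) <= 0 -> (z - p) * (z - q) <= 0 ->
  `|y - z| <= `|q - p|.
Proof.
move=> H1 H2; case: (lerP p q) => pq.
  have /andP[h1 h2] := btw H1 pq. have /andP[h3 h4] := btw H2 pq.
  have e2 : 0 <= q - p by lra.
  rewrite ler_norml; apply/andP; split; lra.
have H1' : (y - q) * (y - p) <= 0 by rewrite mulrC.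
have H2' : (z - q) * (z - p) <= 0 by rewrite mulrC.
have /andP[h1 h2] := btw H1' (ltW pq). have /andP[h3 h4] := btw H2' (ltW pq).
have e2 : q - p <= 0 by lra.
rewrite ler_norml; apply/andP; split; lra.
Qed.

Lemma BchordA (n : nat) (x : nat -> R) (k : nat) : (5 <= n)%N ->
  (forall i j, (i < j)%N -> x i < x j) ->
  exists be : R, Bpt n (para x) k = (be, (xm n x (k + n - 1) + xm n x k.+1) * be - xm n x (k + n - 1) * xm n x k.+1)
    /\ (be - xm n x (k + n - 1)) * (be - xm n x k.+1) <= 0.
Proof.
move=> n5 xinc.
have [be [H1 [H2 [H3 H4]]]] := Bform k n5 xinc.
have e : (k + n - 1 + 2 = k.+1 + n)%N by lia.
rewrite e xm_addn in H1 H3.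
by exists be.
Qed.

Lemma BchordB (n : nat) (x : nat -> R) (k : nat) : (5 <= n)%N ->
  (forall i j, (i < j)%N -> x i < x j) ->
  exists be : R, Bpt n (para x) k = (be, (xm n x k + xm n x k.+2) * be - xm n x k * xm n x k.+2)
    /\ (be - xm n x k) * (be - xm n x k.+2) <= 0.
Proof.
move=> n5 xinc.
have [be [H1 [H2 [H3 H4]]]] := Bform k n5 xinc.
have e1 : (k + n - 1 + 1 = k + n)%N by lia.
have e3 : (k + n - 1 + 3 = k.+2 + n)%N by lia.
rewrite e1 e3 !xm_addn in H2 H4. rewrite H2 in H1.
by exists be.
Qed.

Lemma key_sum (n : nat) (g h f : nat -> R) : g n = g 0%N -> f n = f 0%N ->
  \sum_(i < n) (g i.+1 - h i + (f i.+1 - f i)) = \sum_(i < n) g i - \sum_(i < n) h i.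
Proof.
move=> Hg Hf.
rewrite big_split !sumrB (sum_shift Hg) (sum_shift Hf) /= subrr addr0 //.
Qed.

Definition gterm (n : nat) (x : nat -> R) (i : nat) : R :=
  (xm n x i.+1 - xm n x i) * (xm n x i.+2 - xm n x i) * (xm n x i.+2 - xm n x i.+1).

Lemma diff_bound (n : nat) (x : nat -> R) : (5 <= n)%N ->
  (forall i j, (i < j)%N -> x i < x j) ->
  `| \sum_(i < n) br (vtx n (para x) i) (vtx n (para x) i.+1)
     - \sum_(i < n) br (Bpt n (para x) i) (Bpt n (para x) i.+1) |
  <= \sum_(i < n) 2 * `|gterm n x i|.
Proof.
move=> n5 xinc.
set A := vtx n (para x). set B := Bpt n (para x).
have n0 : (0 < n)%N by lia.
have An : A n = A 0%N by rewrite /A /vtx modnn mod0n.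
have An1 : A n.+1 = A 1%N by rewrite /A -add1n vtx_addn.
have Bn : B n = B 0%N by rewrite /B -(Bpt_mod _ _ n0) modnn.
have key : \sum_(i < n) br (A i) (A i.+1) - \sum_(i < n) br (B i) (B i.+1) =
   \sum_(i < n) (cross (A i.+1) (A i.+2) (B i.+1) + cross (B i.+1) (B i) (A i.+1)).
  have e : forall i : nat, cross (A i.+1) (A i.+2) (B i.+1) + cross (B i.+1) (B i) (A i.+1)
     = br (A i.+1) (A i.+2) - br (B i) (B i.+1) + (br (A i.+2) (B i.+1) - br (A i.+1) (B i)).
    by move=> i; rewrite /br /cross; ring.
  under [X in _ = X]eq_bigr => i _ do rewrite e.
  symmetry; apply: (@key_sum n (fun i => br (A i) (A i.+1)) (fun i => br (B i) (B i.+1)) (fun i => br (A i.+1) (B i))).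
    by rewrite An An1.
  by rewrite An1 Bn.
rewrite key.
apply: le_trans (ler_norm_sum _ _ _) _.
apply: ler_sum => i _.
have [be1 [HB1 Hb1]] := BchordA i.+1 n5 xinc.
have [be0 [HB0 Hb0]] := BchordB i n5 xinc.
have e : (i.+1 + n - 1 = i + n)%N by lia.
rewrite e xm_addn in HB1 Hb1.
rewrite -/B in HB1 HB0.
rewrite HB1 HB0 /A !vtx_para.
set w1 := xm n x i in HB1 HB0 Hb1 Hb0 *.
set u := xm n x i.+1.
set w2 := xm n x i.+2 in HB1 HB0 Hb1 Hb0 *.
have eT : cross (u, u ^+ 2) (w2, w2 ^+ 2) (be1, (w1 + w2) * be1 - w1 * w2) = (w2 - u) * (w1 - u) * (be1 - w2)
  by rewrite /cross /=; ring.
have eU : cross (be1, (w1 + w2) * be1 - w1 * w2) (be0, (w1 + w2) * be0 - w1 * w2) (u, u ^+ 2)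
  = (be0 - be1) * (u - w1) * (u - w2) by rewrite /cross /=; ring.
rewrite eT eU.
have hg : `|gterm n x i| = `|u - w1| * `|w2 - w1| * `|w2 - u|.
  by rewrite /gterm -/w1 -/u -/w2 !normrM.
apply: le_trans (ler_normD _ _) _.
have -> : 2 * `|gterm n x i| = `|gterm n x i| + `|gterm n x i| by ring.
apply: lerD.
  rewrite hg !normrM.
  have h1 := btw_abs Hb1.
  have -> : `|w1 - u| = `|u - w1| by rewrite distrC.
  have H : `|be1 - w2| * (`|u - w1| * `|w2 - u|) <= `|w2 - w1| * (`|u - w1| * `|w2 - u|).
    by apply: ler_wpM2r => //; rewrite mulr_ge0.
  nra.
rewrite hg !normrM.
have h1 := btw_abs2 Hb0 Hb1.
have -> : `|u - w2| = `|w2 - u| by rewrite distrC.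
have H : `|be0 - be1| * (`|u - w1| * `|w2 - u|) <= `|w2 - w1| * (`|u - w1| * `|w2 - u|).
  by apply: ler_wpM2r => //; rewrite mulr_ge0.
nra.
Qed.

Lemma sum_cube (n : nat) (X : nat -> R) : X n = X 0%N ->
  \sum_(i < n) 3 * (X i * X i.+1 ^+ 2 - X i.+1 * X i ^+ 2) = - \sum_(i < n) (X i.+1 - X i) ^+ 3.
Proof.
move=> H.
have e : forall i : nat, 3 * (X i * X i.+1 ^+ 2 - X i.+1 * X i ^+ 2) = (X i.+1 ^+ 3 - X i ^+ 3) - (X i.+1 - X i) ^+ 3.
  by move=> i; ring.
under eq_bigr => i _ do rewrite e.
rewrite sumrB.
have -> : \sum_(i < n) (X i.+1 ^+ 3 - X i ^+ 3) = 0.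
  rewrite sumrB.
  have -> : \sum_(i < n) X i.+1 ^+ 3 = \sum_(i < n) X i ^+ 3.
    by apply: (@sum_shift n (fun i => X i ^+ 3)); rewrite H.
  by rewrite subrr.
by rewrite sub0r.
Qed.

Lemma tele (m : nat) (x : nat -> R) : \sum_(i < m) (x i.+1 - x i) = x m - x 0%N.
Proof. by rewrite -(big_mkord xpredT (fun i => x i.+1 - x i)) telescope_sumr. Qed.

Lemma SA_lower (n : nat) (x : nat -> R) (M : R) : (2 <= n)%N ->
  (forall i j, (i < j)%N -> x i < x j) ->
  (forall i, (i.+1 < n)%N -> x i.+1 - x i <= M) -> 0 <= M ->
  (x n.-1 - x 0%N) ^+ 3 - M ^+ 2 * (x n.-1 - x 0%N) <=
  3 * \sum_(i < n) br (vtx n (para x) i) (vtx n (para x) i.+1).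
Proof.
move=> n2 xinc HM M0.
have n0 : (0 < n)%N by lia.
rewrite mulr_sumr.
have e : forall i : nat, 3 * br (vtx n (para x) i) (vtx n (para x) i.+1) =
   3 * (xm n x i * xm n x i.+1 ^+ 2 - xm n x i.+1 * xm n x i ^+ 2) by [].
under eq_bigr => i _ do rewrite e.
rewrite sum_cube; last by rewrite /xm modnn mod0n.
clear e; case: n n2 n0 HM => [//|m] n2 n0 HM.
rewrite big_ord_recr /=.
have -> : xm m.+1 x m.+1 = x 0%N by rewrite /xm modnn.
have -> : xm m.+1 x m = x m by rewrite /xm modn_small.
have -> : \sum_(i < m) (xm m.+1 x (widen_ord (leqnSn m) i).+1 - xm m.+1 x (widen_ord (leqnSn m) i)) ^+ 3
   = \sum_(i < m) (x i.+1 - x i) ^+ 3.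
  apply: eq_bigr => i _ /=.
  have hi := ltn_ord i.
  by rewrite /xm !modn_small //; lia.
have hs : \sum_(i < m) (x i.+1 - x i) ^+ 3 <= \sum_(i < m) M ^+ 2 * (x i.+1 - x i).
  apply: ler_sum => i _.
  have hi := ltn_ord i.
  have h1 := xinc i i.+1 (ltnSn i).
  have h3 : x i.+1 - x i <= M by apply: HM; lia.
  set g := x i.+1 - x i in h1 h3 *.
  have g0 : 0 <= g by rewrite /g; lra.
  have : g ^+ 2 <= M ^+ 2 by rewrite ler_sqr ?nnegrE //.
  move=> hg.
  have -> : g ^+ 3 = g ^+ 2 * g by ring.
  by rewrite [X in _ <= X]mulrC [X in X <= _]mulrC ler_wpM2l.
rewrite -mulr_sumr tele in hs.
lra.
Qed.

Lemma normle (y d : R) : `|y| <= d -> - d <= y /\ y <= d.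
Proof. by move/ler_normlP => [h1 h2]; split; lra. Qed.

Lemma strip1 (p q be dl : R) : `|p ^+ 2 - p| <= dl -> `|q ^+ 2 - q| <= dl ->
  (be - p) * (be - q) <= 0 -> `|(p + q) * be - p * q - be| <= dl.
Proof.
move=> /normle [h1 h2] /normle [h3 h4] hb.
set y := (p + q) * be - p * q - be.
have hy : (y - (p ^+ 2 - p)) * (y - (q ^+ 2 - q)) <= 0.
  have -> : (y - (p ^+ 2 - p)) * (y - (q ^+ 2 - q)) = (p + q - 1) ^+ 2 * ((be - p) * (be - q)) by rewrite /y; ring.
  by rewrite mulr_ge0_le0 // sqr_ge0.
rewrite ler_norml; case: (lerP (p ^+ 2 - p) (q ^+ 2 - q)) => hpq.
  by have /andP[a1 a2] := btw hy hpq; apply/andP; split; lra.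
have hy' : (y - (q ^+ 2 - q)) * (y - (p ^+ 2 - p)) <= 0 by rewrite mulrC.
by have /andP[a1 a2] := btw hy' (ltW hpq); apply/andP; split; lra.
Qed.

Lemma bound1 (p q be : R) : -1 <= p <= 2 -> -1 <= q <= 2 -> (be - p) * (be - q) <= 0 -> `|be| <= 2.
Proof.
move=> /andP[h1 h2] /andP[h3 h4] hb.
rewrite ler_norml; case: (lerP p q) => hpq.
  by have /andP[a1 a2] := btw hb hpq; apply/andP; split; lra.
have hb' : (be - q) * (be - p) <= 0 by rewrite mulrC.
by have /andP[a1 a2] := btw hb' (ltW hpq); apply/andP; split; lra.
Qed.

Lemma modne (n m d1 d2 : nat) : (d1 < n)%N -> (d2 < n)%N -> d1 != d2 ->
  ((m + d1) %% n != (m + d2) %% n)%N.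
Proof. by move=> h1 h2 h3; rewrite eqn_modDl !modn_small. Qed.

Lemma Bstrip (n : nat) (x : nat -> R) (dl : R) (k : nat) : (5 <= n)%N ->
  (forall i j, (i < j)%N -> x i < x j) ->
  (forall j, (j %% n != 0)%N -> `|xm n x j ^+ 2 - xm n x j| <= dl) ->
  (forall j, -1 <= xm n x j <= 2) ->
  `|(Bpt n (para x) k).1| <= 2 /\ `|(Bpt n (para x) k).2 - (Bpt n (para x) k).1| <= dl.
Proof.
move=> n5 xinc Hg Hr.
have [be [H1 [H2 [H3 H4]]]] := Bform k n5 xinc.
rewrite H1 /=.
set m := (k + n - 1)%N in H1 H2 H3 H4 *.
split; first exact: bound1 (Hr _) (Hr _) H3.
have [c1|c1] := boolP [&& (m %% n != 0)%N & ((m + 2) %% n != 0)%N].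
  case/andP: c1 => c1 c2.
  exact: strip1 (Hg _ c1) (Hg _ c2) H3.
rewrite H2.
have c2 : ((m + 1) %% n != 0)%N && ((m + 3) %% n != 0)%N.
  have d01 := @modne n m 0 1 ltac:(lia) ltac:(lia) isT.
  have d03 := @modne n m 0 3 ltac:(lia) ltac:(lia) isT.
  have d21 := @modne n m 2 1 ltac:(lia) ltac:(lia) isT.
  have d23 := @modne n m 2 3 ltac:(lia) ltac:(lia) isT.
  rewrite addn0 in d01 d03.
  rewrite negb_and !negbK in c1.
  apply/andP; split; apply/negP => /eqP h; case/orP: c1 => /eqP h'.
  - by move: d01; rewrite h h'.
  - by move: d21; rewrite h h'.
  - by move: d03; rewrite h h'.
  - by move: d23; rewrite h h'.
case/andP: c2 => c2 c3.
exact: strip1 (Hg _ c2) (Hg _ c3) H4.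
Qed.

Lemma SB_small (n : nat) (x : nat -> R) (dl : R) : (5 <= n)%N ->
  (forall i j, (i < j)%N -> x i < x j) ->
  (forall j, (j %% n != 0)%N -> `|xm n x j ^+ 2 - xm n x j| <= dl) ->
  (forall j, -1 <= xm n x j <= 2) ->
  `|\sum_(i < n) br (Bpt n (para x) i) (Bpt n (para x) i.+1)| <= (4 * dl) *+ n.
Proof.
move=> n5 xinc Hg Hr.
apply: le_trans (ler_norm_sum _ _ _) _.
rewrite -[n in X in _ <= X]card_ord -sumr_const.
apply: ler_sum => i _.
have [a1 a2] := Bstrip i n5 xinc Hg Hr.
have [b1 b2] := Bstrip i.+1 n5 xinc Hg Hr.
set p := Bpt n (para x) i in a1 a2 *. set q := Bpt n (para x) i.+1 in b1 b2 *.
have -> : br p q = p.1 * (q.2 - q.1) - q.1 * (p.2 - p.1) by rewrite /br; ring.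
apply: le_trans (ler_normB _ _) _.
rewrite !normrM.
have h1 : `|p.1| * `|q.2 - q.1| <= 2 * dl by apply: ler_pM => //.
have h2 : `|q.1| * `|p.2 - p.1| <= 2 * dl by apply: ler_pM => //.
lra.
Qed.

Definition xs (p q : nat) (t : R) (j : nat) : R :=
  j%:R * t + (if (j < p)%N then -1 else if (j < q)%N then 0 else 1).

Lemma xs_inc (p q : nat) (t : R) : 0 < t -> (p < q)%N ->
  forall i j, (i < j)%N -> xs p q t i < xs p q t j.
Proof.
move=> t0 pq i j ij.
have h : i%:R * t < j%:R * t by rewrite ltr_pM2r // ltr_nat.
rewrite /xs; case: ifP => h1; case: ifP => h2; try case: ifP => h3; try case: ifP => h4;
  try lra; lia.
Qed.

Lemma xs_gap (p q : nat) (t : R) j : (j.+1 != p)%N -> (j.+1 != q)%N -> xs p q t j.+1 - xs p q t j = t.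
Proof.
move=> h1 h2.
have e : (j.+1)%:R * t = j%:R * t + t by rewrite -addn1 natrD mulrDl mul1r.
rewrite /xs e; case: ifP => a1; case: ifP => a2; try case: ifP => a3; try case: ifP => a4;
  try lra; lia.
Qed.

Lemma xs_gap_le (p q : nat) (t : R) j : (p < q)%N -> xs p q t j.+1 - xs p q t j <= 1 + t.
Proof.
move=> pq.
have e : (j.+1)%:R * t = j%:R * t + t by rewrite -addn1 natrD mulrDl mul1r.
rewrite /xs e; case: ifP => a1; case: ifP => a2; try case: ifP => a3; try case: ifP => a4;
  try lra; lia.
Qed.

Lemma xs_range (p q n : nat) (t : R) j : 0 <= t -> n%:R * t <= 1 -> (j < n)%N ->
  -1 <= xs p q t j <= 2.
Proof.
move=> t0 nt jn.
have h : j%:R * t <= n%:R * t by rewrite ler_wpM2r // ler_nat ltnW.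
have h' : 0 <= j%:R * t by rewrite mulr_ge0.
rewrite /xs; apply/andP; split; case: ifP => a1; try case: ifP => a2; lra.
Qed.

Lemma nhalf (u : R) : `|u / 2| = `|u| / 2.
Proof. by rewrite normrM normfV (ger0_norm (_ : (0:R) <= 2)). Qed.

Lemma SA_ge1 (n p q : nat) (t : R) : (5 <= n)%N -> 0 < t -> n%:R * t <= 1 ->
  (1 <= p)%N -> (p < q)%N -> (q <= n.-1)%N ->
  7/6 <= \sum_(i < n) br (vtx n (para (xs p q t)) i) (vtx n (para (xs p q t)) i.+1).
Proof.
move=> n5 t0 nt p1 pq qn.
have := @SA_lower n (xs p q t) (1 + t) ltac:(lia) (xs_inc t0 pq)
  (fun i _ => xs_gap_le t i pq) ltac:(lra).
have eL : xs p q t n.-1 - xs p q t 0%N = 2 + n.-1%:R * t.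
  rewrite /xs; case: ifP => a1; try lia; case: ifP => a2; try lia.
  case: ifP => a3; try lia. rewrite mul0r; lra.
rewrite eL.
have h1 : n.-1%:R * t <= n%:R * t by apply: ler_wpM2r; [exact: ltW | rewrite ler_nat; lia].
have h2 : 0 <= n.-1%:R * t by apply: mulr_ge0; [exact: ler0n | exact: ltW].
have ht : t <= 1/5.
  have : (5:R) <= n%:R by rewrite ler_nat.
  nra.
set L := 2 + n.-1%:R * t.
move=> H.
have hL : 2 <= L <= 3 by rewrite /L; apply/andP; split; lra.
case/andP: hL => hL1 hL2.
have hM : (1 + t) ^+ 2 <= 36/25 by nra.
have hL3 : 64/25 <= L ^+ 2 - (1 + t) ^+ 2 by nra.
have : 2 * (64/25) <= L * (L ^+ 2 - (1 + t) ^+ 2) by apply: ler_pM => //; lra.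
have eL3 : L ^+ 3 - (1 + t) ^+ 2 * L = L * (L ^+ 2 - (1 + t) ^+ 2) by ring.
rewrite eL3 in H.
lra.
Qed.

Lemma partA (n : nat) (eps : R) : (5 <= n)%N -> 0 < eps ->
  exists P : nat -> point R, convex_ngon n P /\ area n (K1 n P) / area n P < eps.
Proof.
move=> n5 e0.
have nR : (5:R) <= n%:R by rewrite ler_nat.
set t := eps / (16 * n%:R ^+ 2 * (eps + 1)).
have den0 : 0 < 16 * n%:R ^+ 2 * (eps + 1) by rewrite !mulr_gt0 ?exprn_gt0; lra.
have t0 : 0 < t by rewrite /t divr_gt0.
set T := n%:R * t.
have eT : 8 * n%:R * T = eps / (2 * (eps + 1)).
  rewrite /T /t; field; apply/andP; split; lra.
have T0 : 0 <= T by apply: mulr_ge0; [exact: ler0n | exact: ltW].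
have T1 : T <= 1.
  have h : eps / (2 * (eps + 1)) <= 1 by rewrite ler_pdivrMr; lra.
  have : 8 * n%:R * T <= 1 by rewrite eT.
  move=> h2. nra.
set x := xs 1 2 t.
have xinc := xs_inc t0 (isT : (1 < 2)%N).
exists (para x); split; first by apply: convex_para => //; lia.
have n0 : (0 < n)%N by lia.
have Hr : forall j, -1 <= xm n x j <= 2.
  by move=> j; apply: (@xs_range 1 2 n) => //; [exact: ltW | rewrite ltn_pmod].
have Hg : forall j, (j %% n != 0)%N -> `|xm n x j ^+ 2 - xm n x j| <= 2 * T.
  move=> j hj; rewrite /xm /x /xs.
  set j' := (j %% n)%N in hj *.
  have hj' : (j' < n)%N by rewrite ltn_pmod.
  have h : j'%:R * t <= T by apply: ler_wpM2r; [exact: ltW | rewrite ler_nat ltnW].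
  have h' : 0 <= j'%:R * t by apply: mulr_ge0; [exact: ler0n | exact: ltW].
  case: ifP => a1; first lia.
  case: ifP => a2.
    have ej : j' = 1%N by lia.
    rewrite ej mul1r addr0 in h h' *.
    rewrite ler_norml; apply/andP; split; nra.
  set y := j'%:R * t in h h' *.
  rewrite ler_norml; apply/andP; split; nra.
have hSB := SB_small n5 xinc Hg Hr.
have hSA := @SA_ge1 n 1 2 t n5 t0 T1 isT isT ltac:(lia).
rewrite -/x in hSA.
rewrite area_B // area_A !nhalf.
set SA := \sum_(i < n) br _ _ in hSA *.
set SB := \sum_(i < n) br _ _ in hSB *.
rewrite (ger0_norm (_ : 0 <= SA)); last lra.
rewrite -mulr_natl in hSB.
have : `|SB| <= eps / (2 * (eps + 1)) by rewrite -eT; lra.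
have hh : eps / (2 * (eps + 1)) < eps.
  by rewrite ltr_pdivrMr; nra.
have hSA0 : 0 < SA / 2 by lra.
rewrite ltr_pdivrMr //.
move=> h.
have : eps * 1 <= eps * SA by rewrite ler_pM2l //; lra.
lra.
Qed.

Lemma g_bound (a b c t : R) : -1 <= a <= 2 -> -1 <= b <= 2 -> -1 <= c <= 2 -> 0 <= t ->
  (b - a = t \/ c - b = t) -> `|(b - a) * (c - a) * (c - b)| <= 9 * t.
Proof.
move=> /andP[a1 a2] /andP[b1 b2] /andP[c1 c2] t0 H.
have n1 : `|b - a| <= 3 by rewrite ler_norml; apply/andP; split; lra.
have n2 : `|c - a| <= 3 by rewrite ler_norml; apply/andP; split; lra.
have n3 : `|c - b| <= 3 by rewrite ler_norml; apply/andP; split; lra.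
rewrite !normrM.
case: H => ->; rewrite (ger0_norm t0).
  have : `|c - a| * `|c - b| <= 3 * 3 by apply: ler_pM.
  move=> h; nra.
have : `|b - a| * `|c - a| <= 3 * 3 by apply: ler_pM.
move=> h; nra.
Qed.

Lemma partB (n : nat) (eps : R) : (6 <= n)%N -> 0 < eps ->
  exists P : nat -> point R, convex_ngon n P /\ area n (K1 n P) / area n P > 1 - eps.
Proof.
move=> n6 e0.
have n5 : (5 <= n)%N by lia.
have nR : (6:R) <= n%:R by rewrite ler_nat.
set t := eps / (36 * n%:R * (eps + 1)).
have den0 : 0 < 36 * n%:R * (eps + 1) by rewrite !mulr_gt0; lra.
have t0 : 0 < t by rewrite /t divr_gt0.
set T := n%:R * t.
have eT : 18 * T = eps / (2 * (eps + 1)).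
  rewrite /T /t; field; apply/andP; split; lra.
have T0 : 0 <= T by apply: mulr_ge0; [exact: ler0n | exact: ltW].
have T1 : T <= 1.
  have h : eps / (2 * (eps + 1)) <= 1 by rewrite ler_pdivrMr; lra.
  lra.
set x := xs 2 4 t.
have xinc := xs_inc t0 (isT : (2 < 4)%N).
exists (para x); split; first by apply: convex_para => //; lia.
have n0 : (0 < n)%N by lia.
have Hr : forall j, -1 <= xm n x j <= 2.
  by move=> j; apply: (@xs_range 2 4 n) => //; [exact: ltW | rewrite ltn_pmod].
have hG : forall i : 'I_n, 2 * `|gterm n x i| <= 18 * t.
  move=> i.
  suff : `|gterm n x i| <= 9 * t by move=> h; lra.
  apply: g_bound => //; try exact: Hr; first exact: ltW.
  have hi := ltn_ord i.
  have [ei|ni] := eqVneq (i : nat) n.-1.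
    right; rewrite /xm ei.
    have -> : (n.-1.+2 = 1 + n)%N by lia.
    have -> : (n.-1.+1 = 0 + n)%N by lia.
    rewrite !modnDr !modn_small //; last lia.
    exact: xs_gap.
  have [e13|n13] := boolP (((i : nat) == 1%N) || ((i : nat) == 3%N)).
    right; rewrite /xm !modn_small; try lia.
    apply: xs_gap; lia.
  left; rewrite /xm !modn_small; try lia.
  apply: xs_gap; lia.
have hD := diff_bound n5 xinc.
have hsum : \sum_(i < n) 2 * `|gterm n x i| <= 18 * T.
  apply: le_trans (ler_sum _ (fun i _ => hG i)) _.
  by rewrite sumr_const card_ord -mulr_natl /T; lra.
have hSA := @SA_ge1 n 2 4 t n5 t0 T1 isT isT ltac:(lia).
rewrite -/x in hSA.
rewrite area_B // area_A !nhalf.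
set SA := \sum_(i < n) br _ _ in hSA hD *.
set SB := \sum_(i < n) br _ _ in hD *.
rewrite (ger0_norm (_ : 0 <= SA)); last lra.
have hh : eps / (2 * (eps + 1)) < eps by rewrite ltr_pdivrMr; nra.
have hSA0 : 0 < SA / 2 by lra.
rewrite ltr_pdivlMr //.
have h1 : SA - SB <= 18 * T by apply: le_trans (ler_norm _) (le_trans hD hsum).
have h2 : SB <= `|SB| by exact: ler_norm.
have : eps * 1 <= eps * SA by rewrite ler_pM2l //; lra.
nra.
Qed.

End S.

Unset Implicit Arguments.

Theorem theorem1p1 (R : realType) :
  (forall n : nat, (5 <= n)%N -> forall eps : R, 0 < eps ->
     exists P : nat -> point R,
       convex_ngon n P /\ area n (K1 n P) / area n P < eps) /\
  (forall n : nat, (6 <= n)%N -> forall eps : R, 0 < eps ->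
     exists P : nat -> point R,
       convex_ngon n P /\ area n (K1 n P) / area n P > 1 - eps).
Proof.
split => n hn eps he; [exact: partA | exact: partB].
Qed.
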